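(* For any $g\ge2$, $n\ge1$ and any $a_1,\dots,a_n\in\mathbb{Z}_{\ge0}$, $$P_{g,n+1}(a_1,\dots,a_n,1)-P_{g,n+1}(a_1,\dots,a_n,0)=P_{g,n}(a_1,\dots,a_n)\cdot\Big(4\sum_{i=1}^na_i-8g+10-2n\Big).$$
   Context: For $g\ge2$, $m\ge1$, $$P_{g,m}(a_1,\dots,a_m):=\sum_{k=1}^m\frac{(-1)^k(2g-3+k)!}{k!}\sum_{(I_1,\dots,I_k)}\ \sum_{\substack{d_1,\dots,d_k\in\mathbb{Z}_{\ge0}\\ d_1+\cdots+d_k=g-2+m}}\prod_{j=1}^k\binom{2a_{[I_j]}+1}{2d_j}\prod_{i=1}^{|I_j|-1}(2d_j+1-2i),$$ where $(I_1,\dots,I_k)$ runs over ordered $k$-tuples of nonempty pairwise disjoint subsets of $\{1,\dots,m\}$ with union $\{1,\dots,m\}$, $a_{[I]}:=\sum_{\ell\in I}a_\ell$, and $\binom{x}{r}$ is the usual binomial coefficient (zero if $r>x$). *)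

(* Defs.v *)
From HB Require Import structures.
From mathcomp Require Import all_boot all_order all_algebra.
Set Implicit Arguments. Unset Strict Implicit. Unset Printing Implicit Defensive.
Import Order.TTheory GRing.Theory Num.Theory.
Local Open Scope ring_scope.

(* Indices {1,...,m} are represented by 'I_m = {0,...,m-1}; the tuple
   (a_1,...,a_m) is the sequence a with size a = m, a_i = nth 0 a (i-1). *)

Definition asum (a : seq nat) (I : {set 'I_(size a)}) : nat :=
  (\sum_(l in I) nth 0%N a l)%N.

Definition ordered_set_partition (m k : nat) (I : {ffun 'I_k -> {set 'I_m}}) : bool :=
  [forall j, I j != set0] &&
  [forall j1, forall j2, (j1 != j2) ==> [disjoint I j1 & I j2]] &&
  (\bigcup_(j < k) I j == [set: 'I_m]).

Definition Pterm (a : seq nat) (k : nat)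
    (I : {ffun 'I_k -> {set 'I_(size a)}}) (d : 'I_k -> nat) : rat :=
  \prod_(j < k)
    ((('C((asum (I j)).*2.+1, (d j).*2))%:R : rat) *
     \prod_(1 <= i < #|I j|) (((d j).*2.+1)%:R - (i.*2)%:R)).

Definition P (g : nat) (a : seq nat) : rat :=
  let m := size a in
  let N := (g - 2 + m)%N in
  \sum_(1 <= k < m.+1)
    ((-1) ^+ k * (((2 * g - 3 + k)`!)%:R / (k`!)%:R) *
     \sum_(I : {ffun 'I_k -> {set 'I_m}} | ordered_set_partition I)
       \sum_(d : {ffun 'I_k -> 'I_N.+1} | (\sum_(j < k) (d j : nat))%N == N)
         Pterm I (fun j => (d j : nat))).

(* Main.v *)
Require Import Defs.
From HB Require Import structures.
From mathcomp Require Import all_boot all_order all_algebra.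
From mathcomp Require Import ring lra zify.
Set Implicit Arguments. Unset Strict Implicit. Unset Printing Implicit Defensive.
Import Order.TTheory GRing.Theory Num.Theory.
Local Open Scope ring_scope.

Definition hc (A s d : nat) : rat :=
  (('C(A.*2.+1, d.*2))%:R : rat) * \prod_(1 <= i < s) ((d.*2.+1)%:R - (i.*2)%:R).

Definition bp (A s : nat) : {poly rat} := \poly_(d < A.+1) hc A s d.

Lemma coef_bp A s d : (bp A s)`_d = hc A s d.
Proof.
rewrite coef_poly; case: ltnP => // hd.
by rewrite /hc bin_small ?mul0r //; lia.
Qed.

Lemma bp00 : bp 0 0 = 1.
Proof.
apply/polyP => d; rewrite coef_bp coef1 /hc big_geq // mulr1.
by case: d => [|d] //=; rewrite bin_small //; lia.
Qed.

Lemma coefXderiv (p : {poly rat}) e : ('X * p^`())`_e = p`_e *+ e.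
Proof. by rewrite coefXM; case: e => [|e] //=; rewrite coef_deriv. Qed.

Lemma hc_diff A s e : (s = 0 -> A = 0)%N ->
  hc A.+1 s.+1 e.+1 - hc A s.+1 e.+1 = ((4 * A + 3)%:R - 2 * e%:R) * hc A s e.
Proof.
rewrite /hc.
have sh : forall x y : nat, (x.+2)%:R - (y.+2)%:R = x%:R - y%:R :> rat.
  by move=> x y; rewrite -[x.+2]addn2 -[y.+2]addn2 !natrD; ring.
case: s => [A0|s _].
  rewrite A0 // !big_geq // !mulr1.
  case: e => [|e]; last by rewrite !bin_small ?subr0 ?mulr0 //; lia.
  by rewrite [X in X%:R - _](_ : _ = 3%N) // bin_small // bin0 mulr0 subr0 mul0n add0n mulr1.
set Pi := \prod_(1 <= i < s.+1) ((e.*2.+1)%:R - (i.*2)%:R).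
have hp : \prod_(1 <= i < s.+2) (((e.+1).*2.+1)%:R - (i.*2)%:R) = (e.*2.+1)%:R * Pi.
  rewrite big_nat_recl // doubleS sh subr0; congr (_ * _).
  by apply: eq_bigr => i _; rewrite !doubleS sh.
rewrite hp.
have hb : 'C((A.+1).*2.+1, (e.+1).*2) = ('C(A.*2.+1, e.*2.+2) + 2 * 'C(A.*2.+1, e.*2.+1) + 'C(A.*2.+1,e.*2))%N.
  rewrite !doubleS !binS; lia.
rewrite hb doubleS.
have key : (e.*2.+1)%:R * ('C(A.*2.+1, e.*2.+1))%:R
    = ((A.*2.+1)%:R - (e.*2)%:R) * ('C(A.*2.+1, e.*2))%:R :> rat.
  case: (leqP e A) => he.
    rewrite -natrM mul_bin_left natrM natrB //; lia.
  by rewrite !bin_small ?mulr0 //; lia.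
have e2 : (e.*2)%:R = 2 * e%:R :> rat by rewrite -muln2 natrM mulrC.
have a2 : (A.*2)%:R = 2 * A%:R :> rat by rewrite -muln2 natrM mulrC.
move: key; rewrite -[e.*2.+1]addn1 -[A.*2.+1]addn1 !natrD e2 a2 => key.
set C1 := ('C(A.*2 + 1, e.*2 + 1))%:R : rat.
set C0 := ('C(A.*2 + 1, e.*2))%:R : rat.
set C2 := ('C(A.*2 + 1, (e.*2 + 1).+1))%:R : rat.
transitivity (2 * ((2 * e%:R + 1) * C1) * Pi + (2 * e%:R + 1) * C0 * Pi); first ring.
rewrite key; ring.
Qed.

Lemma bp_diff A s : (s = 0 -> A = 0)%N ->
  bp A.+1 s.+1 - bp A s.+1 =
  'X * ((4 * A + 3)%:R *: bp A s - 2%:R *: ('X * (bp A s)^`())).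
Proof.
move=> hs; apply/polyP => d; rewrite coefB coefXM !coef_bp.
case: d => [|e] /=.
  by rewrite /hc !bin0 subrr.
rewrite coefB !coefZ coef_bp coefXderiv hc_diff // coef_bp -mulr_natr; ring.
Qed.

Lemma prod_recr_cond k (P : pred 'I_k.+1) (F : 'I_k.+1 -> {poly rat}) :
  \prod_(i < k.+1 | P i) F i =
  (\prod_(i < k | P (widen_ord (leqnSn k) i)) F (widen_ord (leqnSn k) i)) *
  (if P ord_max then F ord_max else 1).
Proof. by rewrite big_mkcond big_ord_recr /= -big_mkcond. Qed.

Lemma deriv_prod k (p : 'I_k -> {poly rat}) :
  (\prod_(j < k) p j)^`() = \sum_(j < k) (p j)^`() * \prod_(i < k | i != j) p i.
Proof.
elim: k p => [|k IH] p.
  by rewrite !big_ord0 derivC.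
rewrite big_ord_recr derivM IH /= big_ord_recr /=.
rewrite prod_recr_cond eqxx mulr1 big_distrl /=.
congr (_ + _).
  apply: eq_bigr => j _.
  rewrite prod_recr_cond /=.
  have -> : (ord_max != widen_ord (leqnSn k) j) by rewrite neq_ltn /= ltn_ord orbT.
  rewrite mulrA; congr (_ * _ * _).
rewrite mulrC; congr (_ * _).
apply: eq_bigl => i; by rewrite neq_ltn /= ltn_ord.
Qed.

Lemma reindex_inj (I J : finType) (V : nmodType) (h : I -> J) (P : pred J) (F : J -> V) :
  injective h -> (forall j, P j -> exists i, j = h i) ->
  \sum_(j | P j) F j = \sum_(i | P (h i)) F (h i).
Proof.
move=> hinj hsur.
rewrite -(big_imset (fun j => F j) (A := [pred i | P (h i)])); last by move=> x y _ _; apply: hinj.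
apply: eq_bigl => j; apply/idP/idP => [Pj|/imsetP [i Pi ->]].
  by case: (hsur j Pj) => i ji; apply/imsetP; exists i; rewrite // inE -ji.
by move: Pi; rewrite inE.
Qed.

Definition fext k (T : Type) (d : 'I_k -> T) (x : T) (j : 'I_k.+1) : T :=
  if unlift ord_max j is Some j' then d j' else x.

Lemma fext_max k T (d : 'I_k -> T) x : fext d x ord_max = x.
Proof. by rewrite /fext unlift_none. Qed.

Lemma fext_lift k T (d : 'I_k -> T) x j : fext d x (lift ord_max j) = d j.
Proof. by rewrite /fext liftK. Qed.

Lemma widen_lift k (j : 'I_k) : widen_ord (leqnSn k) j = lift ord_max j.
Proof. by apply: val_inj; rewrite /= /bump leqNgt ltn_ord. Qed.

Lemma fext_widen k T (d : 'I_k -> T) x j : fext d x (widen_ord (leqnSn k) j) = d j.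
Proof. by rewrite widen_lift fext_lift. Qed.

Definition ffext k (T : finType) (p : T * {ffun 'I_k -> T}) : {ffun 'I_k.+1 -> T} :=
  [ffun j => fext p.2 p.1 j].

Lemma ffext_inj k (T : finType) : injective (@ffext k T).
Proof.
move=> [x d] [y e] /= /ffunP H.
have := H ord_max; rewrite !ffunE !fext_max /= => ->.
congr pair; apply/ffunP => j.
by have := H (lift ord_max j); rewrite !ffunE !fext_lift /=.
Qed.

Lemma ffext_sur k (T : finType) (e : {ffun 'I_k.+1 -> T}) :
  e = ffext (e ord_max, [ffun j => e (lift ord_max j)]).
Proof.
apply/ffunP => j; rewrite ffunE /fext /=.
by case: unliftP => [j' ->|->]; rewrite ?ffunE.
Qed.

Lemma big_ffext (R : Type) (idx : R) (op : Monoid.law idx) k (T : finType)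
   (G : 'I_k.+1 -> T -> R) (xd : T * {ffun 'I_k -> T}) :
  \big[op/idx]_(j < k.+1) G j (ffext xd j) =
  op (\big[op/idx]_(j < k) G (widen_ord (leqnSn k) j) (xd.2 j)) (G ord_max xd.1).
Proof.
rewrite big_ord_recr /= ffunE fext_max; congr (op _ _).
by apply: eq_bigr => j _; rewrite ffunE fext_widen.
Qed.

Lemma sum_ffext k B (xd : 'I_B.+1 * {ffun 'I_k -> 'I_B.+1}) :
  (\sum_(j < k.+1) (ffext xd j : nat))%N = (\sum_(j < k) (xd.2 j : nat) + xd.1)%N.
Proof. exact: (big_ffext _ (fun j (x : 'I_B.+1) => (x : nat))). Qed.

Lemma prod_ffext k B (xd : 'I_B.+1 * {ffun 'I_k -> 'I_B.+1}) (p : 'I_k.+1 -> {poly rat}) :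
  \prod_(j < k.+1) (p j)`_(ffext xd j) =
  (\prod_(j < k) (p (widen_ord (leqnSn k) j))`_(xd.2 j)) * (p ord_max)`_(xd.1).
Proof. exact: (big_ffext _ (fun j (x : 'I_B.+1) => (p j)`_x)). Qed.

Lemma coef_prod_ffun k B N (p : 'I_k -> {poly rat}) : (N <= B)%N ->
  (\prod_(j < k) p j)`_N =
  \sum_(d : {ffun 'I_k -> 'I_B.+1} | (\sum_(j < k) (d j : nat))%N == N)
     \prod_(j < k) (p j)`_(d j).
Proof.
elim: k N p => [|k IH] N p hN.
  rewrite big_ord0 coef1; case: N hN => [|N] hN /=.
    under eq_bigl do rewrite big_ord0 eqxx.
    under eq_bigr do rewrite big_ord0.
    by rewrite sumr_const card_ffun !card_ord.
  by symmetry; apply: big_pred0 => d; rewrite big_ord0.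
rewrite (reindex_inj (h := @ffext k _)); last first.
- by move=> e _; exists (e ord_max, [ffun j => e (lift ord_max j)]); apply: ffext_sur.
- exact: ffext_inj.
transitivity (\sum_(x < B.+1) \sum_(d : {ffun 'I_k -> 'I_B.+1} | (\sum_(j < k) (d j : nat) + x == N)%N)
   (\prod_(j < k) (p (widen_ord (leqnSn k) j))`_(d j)) * (p ord_max)`_x); last first.
  rewrite pair_big_dep /=; apply: eq_big => -[x d] /=; first by rewrite sum_ffext.
  by move=> _; rewrite prod_ffext.
rewrite big_ord_recr coefMr /= (big_ord_widen (B.+1) (fun x => (\prod_(i < k) p (widen_ord (leqnSn k) i))`_(N - x) * (p ord_max)`_x)) //.
rewrite big_mkcond /=; apply: eq_bigr => x _.
case: ifP => hx.
  rewrite (IH (N - x)%N); last by lia.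
  rewrite big_distrl /=; apply: eq_bigl => d; apply/eqP/eqP; lia.
symmetry; apply: big_pred0 => d; apply/eqP; lia.
Qed.

Definition labset m k (lab : {ffun 'I_m -> 'I_k}) : {ffun 'I_k -> {set 'I_m}} :=
  [ffun j => [set i | lab i == j]].

Definition surj m k (lab : {ffun 'I_m -> 'I_k}) : bool := [forall j, exists i, lab i == j].

Lemma labset_inj m k : injective (@labset m k).
Proof.
move=> l1 l2 /ffunP H; apply/ffunP => i.
have := H (l1 i); rewrite !ffunE => /setP /(_ i); rewrite !inE eqxx.
by move/esym/eqP.
Qed.

Lemma osp_labset m k (lab : {ffun 'I_m -> 'I_k}) :
  ordered_set_partition (labset lab) = surj lab.
Proof.
rewrite /ordered_set_partition.
have -> : [forall j1, forall j2, (j1 != j2) ==> [disjoint labset lab j1 & labset lab j2]].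
  apply/forallP => j1; apply/forallP => j2; apply/implyP => ne.
  rewrite !ffunE -setI_eq0; apply/eqP/setP => i; rewrite !inE.
  by apply/negbTE; apply: contra ne => /andP [/eqP <- /eqP <-].
have -> : \bigcup_(j < k) labset lab j == [set: 'I_m].
  apply/eqP/setP => i; rewrite inE; apply/bigcupP; exists (lab i) => //.
  by rewrite ffunE inE.
rewrite !andbT; apply/forallP/forallP => H j.
  by case/set0Pn: (H j) => i; rewrite ffunE inE => hi; apply/existsP; exists i.
by case/existsP: (H j) => i hi; apply/set0Pn; exists i; rewrite ffunE inE.
Qed.

Lemma labset_sur m k (I : {ffun 'I_k -> {set 'I_m}}) :
  ordered_set_partition I -> exists lab, I = labset lab.
Proof.
case/andP => [/andP [_ hdisj] hcov].
have : forall i, exists j, i \in I j.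
  move=> i; have : i \in \bigcup_(j < k) I j by rewrite (eqP hcov) inE.
  by case/bigcupP => j _ hi; exists j.
case/fin_all_exists => f hf; exists (finfun f).
apply/ffunP => j; rewrite !ffunE; apply/setP => i; rewrite inE ffunE.
apply/idP/eqP => [hij | <-] //; apply/eqP; apply: contraT => ne.
move/forallP: hdisj => /(_ (f i)) /forallP /(_ j) /implyP H.
by rewrite (disjointFr (H ne) (hf i)) in hij.
Qed.

Definition blkA m (f : nat -> nat) k (lab : {ffun 'I_m -> 'I_k}) (j : 'I_k) : nat :=
  (\sum_(i < m | lab i == j) f i)%N.
Definition blkS m k (lab : {ffun 'I_m -> 'I_k}) (j : 'I_k) : nat := #|[set i | lab i == j]|.

Definition Phi m (f : nat -> nat) k : {poly rat} :=
  \sum_(lab : {ffun 'I_m -> 'I_k} | surj lab) \prod_(j < k) bp (blkA f lab j) (blkS lab j).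

Definition ck g k : rat := (-1) ^+ k * (((2 * g - 3 + k)`!)%:R / (k`!)%:R).

Definition Q g m f : rat := \sum_(1 <= k < m.+1) ck g k * (Phi m f k)`_(g - 2 + m).

Lemma PQ g a : P g a = Q g (size a) (nth 0%N a).
Proof.
rewrite /P /Q; apply: eq_big_nat => k _; congr (_ * _).
rewrite /Phi coef_sum.
rewrite (reindex_inj (h := @labset (size a) k)); last first.
- by move=> I /labset_sur.
- exact: labset_inj.
apply: eq_big => lab; first by rewrite osp_labset.
move=> _.
rewrite (coef_prod_ffun _ (leqnn _)); apply: eq_bigr => d _.
rewrite /Pterm; apply: eq_bigr => j _.
rewrite coef_bp /hc /blkA /blkS /asum ffunE; congr (('C(_, _))%:R * _).
by congr (_.*2.+1); apply: eq_bigl => i; rewrite inE.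
Qed.

Section Ext.
Variables (m : nat) (f fx : nat -> nat) (k : nat).
Hypothesis hf : forall i, (i < m)%N -> fx i = f i.

Lemma blkA_ffext j0 (lab : {ffun 'I_m -> 'I_k}) j :
  blkA fx (ffext (j0, lab)) j = (blkA f lab j + (if j0 == j then fx m else 0))%N.
Proof.
rewrite /blkA big_mkcond big_ord_recr /= ffunE fext_max -big_mkcond /=.
congr (_ + _)%N; apply: eq_big => i; first by rewrite ffunE fext_widen.
by move=> _; rewrite hf.
Qed.

Lemma card_sum m' (P : pred 'I_m') : #|[set i | P i]| = (\sum_(i < m' | P i) 1)%N.
Proof. by rewrite -sum1_card; apply: eq_bigl => i; rewrite inE. Qed.

Lemma blkS_ffext j0 (lab : {ffun 'I_m -> 'I_k}) j :
  blkS (ffext (j0, lab)) j = (blkS lab j + (j0 == j))%N.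
Proof.
rewrite /blkS !card_sum big_mkcond big_ord_recr /= ffunE fext_max -big_mkcond /=.
congr (_ + _)%N; first by apply: eq_bigl => i; rewrite ffunE fext_widen.

Qed.

End Ext.

Lemma blkA0 m f k (lab : {ffun 'I_m -> 'I_k}) j : blkS lab j = 0%N -> blkA f lab j = 0%N.
Proof.
rewrite /blkS; move=> /eqP; rewrite cards_eq0; move=> /eqP H.
rewrite /blkA big_pred0 // => i; apply/negbTE/negP => hi.
have : i \in [set i | lab i == j] by rewrite inE.
by rewrite H inE.
Qed.

Lemma sum_blkA m f k (lab : {ffun 'I_m -> 'I_k}) :
  (\sum_(j < k) blkA f lab j)%N = (\sum_(i < m) f i)%N.
Proof.
rewrite /blkA; under eq_bigr do rewrite big_mkcond.
rewrite exchange_big /=; apply: eq_bigr => i _.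
by rewrite -big_mkcond /= (big_pred1 (lab i)) // => j; rewrite eq_sym.
Qed.

Lemma prod_ext m f fx k (hf : forall i, (i < m)%N -> fx i = f i) j0 (lab : {ffun 'I_m -> 'I_k}) :
  \prod_(j < k) bp (blkA fx (ffext (j0, lab)) j) (blkS (ffext (j0, lab)) j) =
  bp (blkA f lab j0 + fx m) (blkS lab j0).+1 *
  \prod_(j < k | j != j0) bp (blkA f lab j) (blkS lab j).
Proof.
rewrite (bigD1 j0) //= (blkA_ffext hf) blkS_ffext eqxx addn1; congr (_ * _).
apply: eq_bigr => j ne; rewrite (blkA_ffext hf) blkS_ffext eq_sym (negbTE ne).
by rewrite !addn0.
Qed.

Definition Tm m f k (j0 : 'I_k) (lab : {ffun 'I_m -> 'I_k}) : {poly rat} :=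
  'X * ((4 * blkA f lab j0 + 3)%:R *: bp (blkA f lab j0) (blkS lab j0)
        - 2%:R *: ('X * (bp (blkA f lab j0) (blkS lab j0))^`())) *
  \prod_(j < k | j != j0) bp (blkA f lab j) (blkS lab j).

Lemma Phi_ext m fx k :
  Phi m.+1 fx k = \sum_(jl : 'I_k * {ffun 'I_m -> 'I_k} | surj (ffext jl))
     \prod_(j < k) bp (blkA fx (ffext jl) j) (blkS (ffext jl) j).
Proof.
rewrite /Phi (reindex_inj (h := @ffext m _)) //; last first.
- by move=> e _; exists (e ord_max, [ffun j => e (lift ord_max j)]); apply: ffext_sur.
exact: ffext_inj.
Qed.

Lemma Phi_diff1 m f f0 f1 k :
  (forall i, (i < m)%N -> f0 i = f i /\ f1 i = f i) -> f0 m = 0%N -> f1 m = 1%N ->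
  Phi m.+1 f1 k - Phi m.+1 f0 k =
  \sum_(j0 < k) \sum_(lab : {ffun 'I_m -> 'I_k} | surj (ffext (j0, lab))) Tm f j0 lab.
Proof.
move=> hf h0 h1.
have hf0 : forall i, (i < m)%N -> f0 i = f i by move=> i /hf [].
have hf1 : forall i, (i < m)%N -> f1 i = f i by move=> i /hf [].
rewrite !Phi_ext -sumrB pair_big_dep /=.
apply: eq_bigr => -[j0 lab] _ /=.
rewrite (prod_ext hf1) (prod_ext hf0) h0 h1 addn0 addn1 -mulrBl.
rewrite bp_diff; last by apply: blkA0.
by rewrite /Tm.
Qed.

Definition Pi m f k (lab : {ffun 'I_m -> 'I_k}) : {poly rat} :=
  \prod_(j < k) bp (blkA f lab j) (blkS lab j).

Lemma TmA m f k (lab : {ffun 'I_m -> 'I_k}) :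
  \sum_(j0 < k) Tm f j0 lab =
  'X * ((4 * (\sum_(i < m) f i) + 3 * k)%:R *: Pi f lab - 2%:R *: ('X * (Pi f lab)^`())).
Proof.
have e1 : forall j0, Tm f j0 lab =
    'X * ((4 * blkA f lab j0 + 3)%:R *: Pi f lab)
    - 'X * (2%:R *: ('X * ((bp (blkA f lab j0) (blkS lab j0))^`() *
          \prod_(j < k | j != j0) bp (blkA f lab j) (blkS lab j)))).
  move=> j0; have -> : Pi f lab = bp (blkA f lab j0) (blkS lab j0) *
          \prod_(j < k | j != j0) bp (blkA f lab j) (blkS lab j) by rewrite /Pi (bigD1 j0).
  by rewrite /Tm -!mul_polyC; ring.
under eq_bigr do rewrite e1.
rewrite sumrB -!mulr_sumr -scaler_suml -scaler_sumr -mulr_sumr /Pi deriv_prod.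
rewrite -mulrBr; congr ('X * (_ *: _ - _)).
rewrite -natr_sum big_split /= -big_distrr /= sum_blkA sum_nat_const card_ord.
by rewrite (mulnC k).
Qed.

Lemma reindex_injG (R : Type) (idx : R) (op : Monoid.com_law idx) (I J : finType)
  (h : I -> J) (P : pred J) (F : J -> R) :
  injective h -> (forall j, P j -> exists i, j = h i) ->
  \big[op/idx]_(j | P j) F j = \big[op/idx]_(i | P (h i)) F (h i).
Proof.
move=> hinj hsur.
rewrite -(big_imset (fun j => F j) (A := [pred i | P (h i)])); last by move=> x y _ _; apply: hinj.
apply: eq_bigl => j; apply/idP/idP => [Pj|/imsetP [i Pi ->]].
  by case: (hsur j Pj) => i ji; apply/imsetP; exists i; rewrite // inE -ji.
by move: Pi; rewrite inE.
Qed.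

Lemma surj_ffextP m k j0 (lab : {ffun 'I_m -> 'I_k}) :
  surj (ffext (j0, lab)) = [forall j, (j == j0) || [exists i, lab i == j]].
Proof.
apply/forallP/forallP => H j.
  case/existsP: (H j) => i; case: (unliftP ord_max i) => [i' ->|->];
    rewrite ffunE ?fext_lift ?fext_max /= => /eqP <-.
    by apply/orP; right; apply/existsP; exists i'.
  by rewrite eqxx.
case/orP: (H j) => [/eqP->|/existsP[i hi]]; apply/existsP.
  by exists ord_max; rewrite ffunE fext_max.
by exists (lift ord_max i); rewrite ffunE fext_lift.
Qed.

Lemma surj_ffext m k j0 (lab : {ffun 'I_m -> 'I_k}) : surj lab -> surj (ffext (j0, lab)).
Proof.
move=> /forallP H; rewrite surj_ffextP; apply/forallP => j.
by rewrite H orbT.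
Qed.

Definition liftlab m k (j0 : 'I_k.+1) (lab0 : {ffun 'I_m -> 'I_k}) : {ffun 'I_m -> 'I_k.+1} :=
  [ffun i => lift j0 (lab0 i)].

Lemma liftlab_inj m k j0 : injective (@liftlab m k j0).
Proof.
move=> l1 l2 /ffunP H; apply/ffunP => i.
by have := H i; rewrite !ffunE => /lift_inj.
Qed.

Lemma blkA_liftlab m f k j0 (lab0 : {ffun 'I_m -> 'I_k}) j :
  blkA f (liftlab j0 lab0) (lift j0 j) = blkA f lab0 j.
Proof. by apply: eq_bigl => i; rewrite ffunE (inj_eq lift_inj). Qed.

Lemma blkS_liftlab m k j0 (lab0 : {ffun 'I_m -> 'I_k}) j :
  blkS (liftlab j0 lab0) (lift j0 j) = blkS lab0 j.
Proof. by rewrite /blkS !card_sum; apply: eq_bigl => i; rewrite ffunE (inj_eq lift_inj). Qed.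

Lemma blkS_liftlab0 m k j0 (lab0 : {ffun 'I_m -> 'I_k}) :
  blkS (liftlab j0 lab0) j0 = 0%N.
Proof. by rewrite /blkS card_sum big_pred0 // => i; rewrite ffunE lift_eqF. Qed.

Lemma Tm_liftlab m f k j0 (lab0 : {ffun 'I_m -> 'I_k}) :
  Tm f j0 (liftlab j0 lab0) = 3%:R *: ('X * Pi f lab0).
Proof.
rewrite /Tm blkS_liftlab0 blkA0 ?blkS_liftlab0 // bp00 derivC mulr0 scaler0 subr0.
rewrite (reindex_injG _ (h := lift j0)); last first.
- by move=> j; rewrite eq_sym => ne; case: (unlift_some ne) => j' -> _; exists j'.
- exact: lift_inj.
under eq_bigl do rewrite eq_sym neq_lift.
under eq_bigr do rewrite blkA_liftlab blkS_liftlab.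
by rewrite /Pi -!mul_polyC mulr1; ring.
Qed.

Lemma caseB m f k (j0 : 'I_k.+1) :
  \sum_(lab : {ffun 'I_m -> 'I_k.+1} | surj (ffext (j0, lab)) && ~~ surj lab) Tm f j0 lab
  = 3%:R *: ('X * Phi m f k).
Proof.
rewrite (reindex_inj (h := liftlab j0)); last first.
- move=> lab /andP [hs hns].
  have hne : forall i, j0 != lab i.
    move=> i; apply: contra hns => /eqP hi; apply/forallP => j.
    move: hs; rewrite surj_ffextP => /forallP /(_ j) /orP [/eqP ->|//].
    by apply/existsP; exists i; rewrite hi.
  have : forall i, exists j', lab i = lift j0 j'.
    by move=> i; case: (unlift_some (hne i)) => j' -> _; exists j'.
  case/fin_all_exists => g hg; exists (finfun g); apply/ffunP => i.
  by rewrite !ffunE hg.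
- exact: liftlab_inj.
rewrite /Phi mulr_sumr scaler_sumr.
apply: eq_big => lab0; last by move=> _; rewrite Tm_liftlab /Pi.
have ns : ~~ surj (liftlab j0 lab0).
  by apply/forallP => /(_ j0) /existsP [i]; rewrite ffunE lift_eqF.
rewrite ns andbT surj_ffextP; apply/forallP/forallP => H j.
  move: (H (lift j0 j)); rewrite lift_eqF /= => /existsP [i].
  by rewrite ffunE (inj_eq lift_inj) => hi; apply/existsP; exists i.
case: (unliftP j0 j) => [j' ->|->]; last by rewrite eqxx.
case/existsP: (H j') => i hi; apply/orP; right; apply/existsP; exists i.
by rewrite ffunE (inj_eq lift_inj).
Qed.

Lemma Phi_diff m f f0 f1 k :
  (forall i, (i < m)%N -> f0 i = f i /\ f1 i = f i) -> f0 m = 0%N -> f1 m = 1%N ->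
  Phi m.+1 f1 k.+1 - Phi m.+1 f0 k.+1 =
  'X * ((4 * (\sum_(i < m) f i) + 3 * k.+1)%:R *: Phi m f k.+1
        - 2%:R *: ('X * (Phi m f k.+1)^`()))
  + (3 * k.+1)%:R *: ('X * Phi m f k).
Proof.
move=> hf h0 h1; rewrite (@Phi_diff1 m f f0 f1 k.+1 hf h0 h1).
under eq_bigr => j0 _ do rewrite (bigID (fun lab => surj lab)) /=.
rewrite big_split /=; congr (_ + _).
  transitivity (\sum_(j0 < k.+1) \sum_(lab : {ffun 'I_m -> 'I_k.+1} | surj lab) Tm f j0 lab).
    apply: eq_bigr => j0 _; apply: eq_bigl => lab.
    by apply/andb_idl => /surj_ffext; apply.
  rewrite exchange_big /=.
  under eq_bigr do rewrite TmA.
  rewrite /Phi [X in _ *: ('X * X)]linear_sum /= -/(Pi _ _).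
  rewrite -mulr_sumr sumrB -!scaler_sumr -mulr_sumr.
  by rewrite /Pi.
under eq_bigr do rewrite caseB.
by rewrite sumr_const card_ord scalerMnl natrM mulr_natr.
Qed.

Lemma Phi0 m f : (0 < m)%N -> Phi m f 0 = 0.
Proof.
move=> hm; rewrite /Phi big1 // => lab _.
by case: (lab (Ordinal hm)).
Qed.

Lemma PhiBig m f : Phi m f m.+1 = 0.
Proof.
rewrite /Phi big_pred0 // => lab; apply/negP => /forallP hs.
have : [set: 'I_m.+1] \subset [set lab i | i in 'I_m].
  apply/subsetP => j _; case/existsP: (hs j) => i /eqP <-.
  by apply/imsetP; exists i.
move/subset_leq_card; rewrite cardsT card_ord.
move/leq_trans/(_ (leq_imset_card _ _)); rewrite card_ord.
by rewrite ltnn.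
Qed.

Lemma coef_diff N (c d : rat) (F G : {poly rat}) :
  ('X * (c *: F - 2%:R *: ('X * F^`())) + d *: ('X * G))`_N.+1
  = (c - 2 * N%:R) * F`_N + d * G`_N.
Proof.
rewrite coefD coefXM /= coefB !coefZ coefXderiv coefXM /= -mulr_natr; ring.
Qed.

Lemma ck_succ g k : (2 <= g)%N -> ck g k.+1 * (k.+1)%:R = - (ck g k * (2 * g - 2 + k)%:R).
Proof.
move=> hg; rewrite /ck.
have hn : (2 * g - 3 + k.+1 = (2 * g - 3 + k).+1)%N by lia.
have hn2 : (2 * g - 2 + k = (2 * g - 3 + k).+1)%N by lia.
rewrite hn hn2 !factS !natrM exprS.
have h1 : ((k`!)%:R : rat) != 0 by rewrite pnatr_eq0 -lt0n fact_gt0.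
have h2 : ((k.+1)%:R : rat) != 0 by rewrite pnatr_eq0.
field.
by rewrite h1 /= addrC natr1.
Qed.

Lemma Q_diff g m f f0 f1 : (2 <= g)%N -> (1 <= m)%N ->
  (forall i, (i < m)%N -> f0 i = f i /\ f1 i = f i) -> f0 m = 0%N -> f1 m = 1%N ->
  Q g m.+1 f1 - Q g m.+1 f0 =
  Q g m f * (4 * (\sum_(i < m) f i)%:R - 8 * g%:R + 10 - 2 * m%:R : rat).
Proof.
move=> hg hm hf h0 h1.
set A := (\sum_(i < m) f i)%N.
set N := (g - 2 + m)%N.
rewrite /Q -sumrB addnS -/N.
rewrite (eq_big_nat _ _ (F2 := fun k => ck g k * ((4 * A + 3 * k)%:R - 2 * N%:R) * (Phi m f k)`_N
      + ck g k * (3 * k)%:R * (Phi m f k.-1)`_N)); last first.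
  move=> k /andP [hk _]; case: k hk => // k _.
  by rewrite -mulrBr -coefB (Phi_diff k hf h0 h1) coef_diff /=; ring.
rewrite big_split /= big_nat_recr //= PhiBig coef0 mulr0 addr0.
rewrite [\sum_(1 <= i < m.+2) _]big_nat_recl //= Phi0 // coef0 mulr0 add0r.
rewrite -big_split /= mulr_suml; apply: eq_big_nat => k /andP [hk _].
have hc := ck_succ k hg.
have -> : ck g k.+1 * (3 * k.+1)%:R = 3 * (ck g k.+1 * k.+1%:R) by rewrite natrM; ring.
rewrite hc /N !natrD natrB // natrB; last by lia.
rewrite !natrM; ring.
Qed.

Unset Implicit Arguments.

Theorem proposition5p5 (g n : nat) (a : seq nat) :
  (2 <= g)%N -> (1 <= n)%N -> size a = n ->
  P g (rcons a 1%N) - P g (rcons a 0%N) =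
  P g a * (4 * (sumn a)%:R - 8 * g%:R + 10 - 2 * n%:R : rat).
Proof.
move=> hg hn ha; rewrite !PQ !size_rcons ha.
have -> : sumn a = (\sum_(i < n) nth 0%N a i)%N.
  by rewrite -ha sumnE (big_nth 0%N) big_mkord.
apply: Q_diff => //.
- by move=> i hi; rewrite !nth_rcons ha hi.
- by rewrite nth_rcons ha ltnn eqxx.
- by rewrite nth_rcons ha ltnn eqxx.
Qed.
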